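(* For every positive integer $t$, \[ L_{\mathcal{T}_{1/2,\,1/6}}(t) - L_{\mathcal{T}_{1/3,\,1/4}}(t) = \begin{cases} d(t) - 1, & t \equiv 4 \pmod{12},\\ d(t), & \text{otherwise,}\end{cases} \] where $d(t) = \lceil t/12 \rceil$ if $t$ is even and $d(t) = 0$ if $t$ is odd.
   Context: For $u,v>0$, $\mathcal{T}_{u,v}$ denotes the closed triangle with vertices $(0,0)$, $(u,0)$, $(0,v)$, and its Ehrhart function is $L_{\mathcal{T}_{u,v}}(t) = \#\left(\mathbb{Z}^2 \cap \mathcal{T}_{tu,tv}\right)$ for positive integers $t$. *)

(* Defs.v *)
From mathcomp Require Import all_boot all_order all_algebra.
Set Implicit Arguments. Unset Strict Implicit. Unset Printing Implicit Defensive.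
Import Order.TTheory GRing.Theory Num.Theory.
Local Open Scope ring_scope.

Definition in_triangle (u v : rat) (x y : int) : bool :=
  [&& 0 <= x, 0 <= y & (x%:~R / u + y%:~R / v <= (1 : rat))].

(* Box bound: any lattice point of T_{tu,tv} has coordinates <= t*u <= t*|numq u|
   (for u > 0) and similarly for v; so counting over the box is exact. *)
Definition box_bound (t : nat) (u : rat) : nat := (t * `|numq u|%N).+1.

Definition ehrhart_triangle (u v : rat) (t : nat) : nat :=
  #|[set p : 'I_(box_bound t u) * 'I_(box_bound t v) |
      in_triangle (t%:R * u) (t%:R * v) (nat_of_ord p.1)%:Z (nat_of_ord p.2)%:Z]|.

Definition dfun (t : nat) : nat := if odd t then 0%N else ((t + 11) %/ 12)%N.

(* Main.v *)
Require Import Defs.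
From mathcomp Require Import all_boot all_order all_algebra ring lra zify.
Import Order.TTheory GRing.Theory Num.Theory.

Definition G (a b t Ny : nat) : nat :=
  \sum_(0 <= y < Ny) (b*y <= t) * ((t - b*y) %/ a).+1.

Lemma inner (a c t Nx : nat) : 0 < a ->
  \sum_(0 <= x < Nx) (a*x + c <= t : nat) = (c <= t) * minn Nx ((t-c) %/ a).+1.
Proof.
move=> a0; elim: Nx => [|n IH]; first by rewrite big_geq // min0n muln0.
rewrite big_nat_recr //= IH.
case: (leqP c t) => ct; last first.
  have -> : (a * n + c <= t) = false by apply/negbTE; rewrite -ltnNge; lia.
  by [].
have -> : (a*n + c <= t) = (n <= (t-c) %/ a) by rewrite leq_divRL // mulnC; lia.
case: (leqP n ((t-c) %/ a)) => h /=; lia.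
Qed.

Lemma Gext a b t N : 0 < b -> t < N -> G a b t N = G a b t t.+1.
Proof.
move=> b0 tN; rewrite /G (big_cat_nat _ (n:=t.+1)) //= [X in _ + X]big1_seq ?addn0 //.
move=> y /andP[_]; rewrite mem_index_iota => /andP[ty _].
have -> : (b*y <= t) = false by apply/negbTE; rewrite -ltnNge; nia.
by [].
Qed.

Definition A t := G 2 6 t t.+1.
Definition B t := G 3 4 t t.+1.

Lemma Arec t : A (t+12) = A t + ((t+12) %/ 2).+1 + ((t+6) %/ 2).+1.
Proof.
rewrite /A /G big_ltn // big_ltn; last lia.
have -> : forall F, \sum_(2 <= i < (t + 12).+1) F i = \sum_(0 <= i < (t + 12).+1 - 2) (F (i + 2)%N : nat).
  by move=> F; rewrite (big_addn 0 _ 2).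
rewrite (eq_bigr (fun y => (6*y <= t) * ((t - 6*y) %/ 2).+1)); last first.
  move=> i _ /=; rewrite (_ : (6*(i+2) <= t+12) = (6*i <= t)); last lia.
  by rewrite (_ : (t+12-6*(i+2) = t-6*i)%N); last lia.
rewrite -/(G 2 6 t _) Gext //; last by lia.
rewrite /G.
have -> : (6 * 1 <= t + 12) = true by lia.
rewrite muln0 leq0n /= !mul1n subn0.
have -> : (t + 12 - 6 * 1 = t + 6)%N by lia.
lia.
Qed.

Lemma Brec t : B (t+12) = B t + ((t+12) %/ 3).+1 + ((t+8) %/ 3).+1 + ((t+4) %/ 3).+1.
Proof.
rewrite /B /G big_ltn // big_ltn; last lia. rewrite big_ltn; last lia.
have -> : forall F, \sum_(3 <= i < (t + 12).+1) F i = \sum_(0 <= i < (t + 12).+1 - 3) (F (i + 3)%N : nat).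
  by move=> F; rewrite (big_addn 0 _ 3).
rewrite (eq_bigr (fun y => (4*y <= t) * ((t - 4*y) %/ 3).+1)); last first.
  move=> i _ /=; rewrite (_ : (4*(i+3) <= t+12) = (4*i <= t)); last lia.
  by rewrite (_ : (t+12-4*(i+3) = t-4*i)%N); last lia.
rewrite -/(G 3 4 t _) Gext //; last by lia.
have -> : (4 * 1 <= t + 12) = true by lia.
have -> : (4 * 2 <= t + 12) = true by lia.
rewrite /G muln0 leq0n /= !mul1n subn0. 
have -> : (t + 12 - 4 * 1 = t + 8)%N by lia.
have -> : (t + 12 - 4 * 2 = t + 4)%N by lia.
lia.
Qed.

Lemma dfun_rec t : (dfun (t+12) = dfun t + ~~ odd t)%N.
Proof.
rewrite /dfun oddD /=.
case: (odd t) => /=; lia.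
Qed.

Lemma keyN t : (A t + (t %% 12 == 4) = B t + dfun t)%N.
Proof.
elim/ltn_ind: t => t IH.
case: (ltnP t 12) => ht.
  clear IH; move: ht.
  do 12! (case: t => [|t]; first by move=> _; rewrite /A /B /G /dfun !big_nat_recr //= !big_geq //; vm_compute).
  by [].
have [s es] : exists s, t = (s + 12)%N by exists (t - 12)%N; lia.
subst t.
rewrite Arec Brec dfun_rec.
have := IH s ltac:(lia).
have -> : ((s + 12) %% 12 = s %% 12)%N by rewrite modnDr.
have := modn2 s.
case: (odd s) => /= ho; lia.
Qed.
Local Open Scope ring_scope.

Lemma nq2 : numq (1/2 : rat) = 1%Z. Proof. by vm_compute. Qed.
Lemma bb2 t : box_bound t (1/2) = t.+1. Proof. by rewrite /box_bound nq2 muln1. Qed.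
Lemma tri1 (t x y : nat) : (0 < t)%N ->
  in_triangle (t%:R * (1/2)) (t%:R * (1/6)) x%:Z y%:Z = (2*x+6*y <= t)%N.
Proof.
move=> t0; rewrite /in_triangle /=.
have tn : (t%:R : rat) != 0 by rewrite pnatr_eq0 -lt0n.
have -> : (x%:~R / (t%:R * (1/2)) + y%:~R / (t%:R * (1/6)) : rat) = (2*x+6*y)%:R / t%:R.
  rewrite natrD !natrM /=. field. by rewrite tn.
by rewrite ler_pdivrMr ?ltr0n // mul1r ler_nat.
Qed.

Lemma nq3 : numq (1/3 : rat) = 1%Z. Proof. by vm_compute. Qed.
Lemma nq4 : numq (1/4 : rat) = 1%Z. Proof. by vm_compute. Qed.
Lemma nq6 : numq (1/6 : rat) = 1%Z. Proof. by vm_compute. Qed.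
Lemma bb t q : numq q = 1%Z -> box_bound t q = t.+1. Proof. by rewrite /box_bound => ->; rewrite muln1. Qed.

Lemma tri2 (t x y : nat) : (0 < t)%N ->
  in_triangle (t%:R * (1/3)) (t%:R * (1/4)) x%:Z y%:Z = (3*x+4*y <= t)%N.
Proof.
move=> t0; rewrite /in_triangle /=.
have tn : (t%:R : rat) != 0 by rewrite pnatr_eq0 -lt0n.
have -> : (x%:~R / (t%:R * (1/3)) + y%:~R / (t%:R * (1/4)) : rat) = (3*x+4*y)%:R / t%:R.
  rewrite natrD !natrM /=. field. by rewrite tn.
by rewrite ler_pdivrMr ?ltr0n // mul1r ler_nat.
Qed.

Lemma card_sum n m (P : nat -> nat -> bool) :
  #|[set p : 'I_n * 'I_m | P p.1 p.2]| = (\sum_(0 <= y < m) \sum_(0 <= x < n) P x y)%N.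
Proof.
rewrite -sum1_card big_mkcond /=.
rewrite (eq_bigr (fun p : 'I_n * 'I_m => (P p.1 p.2 : nat))); last first.
  by move=> p _; rewrite inE; case: (P _ _).
rewrite -(pair_bigA _ (fun (i : 'I_n) (j : 'I_m) => (P i j : nat))) /= exchange_big /=.
rewrite big_mkord; apply: eq_bigr => y _; by rewrite big_mkord.
Qed.

Lemma toG a b t : (0 < a)%N ->
  (\sum_(0 <= y < t.+1) \sum_(0 <= x < t.+1) (a*x + b*y <= t : nat))%N = G a b t t.+1.
Proof.
move=> a0; apply: eq_bigr => y _; rewrite inner //.
case: (leqP (b*y) t) => h //=; rewrite !mul1n.
apply/minn_idPr; rewrite ltnS; apply: leq_trans (leq_div _ _) _; lia.
Qed.

Lemma ehrA t : (0 < t)%N -> ehrhart_triangle (1/2) (1/6) t = A t.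
Proof.
move=> t0; rewrite /ehrhart_triangle.
rewrite (@card_sum _ _ (fun x y => in_triangle (t%:R * (1/2)) (t%:R * (1/6)) x%:Z y%:Z)).
rewrite bb2 (@bb t _ nq6) /A -toG //; apply: eq_bigr => y _; apply: eq_bigr => x _.
by rewrite tri1.
Qed.

Lemma ehrB t : (0 < t)%N -> ehrhart_triangle (1/3) (1/4) t = B t.
Proof.
move=> t0; rewrite /ehrhart_triangle.
rewrite (@card_sum _ _ (fun x y => in_triangle (t%:R * (1/3)) (t%:R * (1/4)) x%:Z y%:Z)).
rewrite (@bb t _ nq3) (@bb t _ nq4) /B -toG //; apply: eq_bigr => y _; apply: eq_bigr => x _.
by rewrite tri2.
Qed.

Theorem mainTheorem13 (t : nat) : (0 < t)%N ->
  ((ehrhart_triangle (1/2) (1/6) t)%:Z - (ehrhart_triangle (1/3) (1/4) t)%:Z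
   = if (t %% 12 == 4)%N then (dfun t)%:Z - 1 else (dfun t)%:Z)%R.
Proof.
move=> t0; rewrite ehrA // ehrB //.
have := keyN t; case: (t %% 12 == 4)%N => /= h; lia.
Qed.
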